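(* Let $P$ and $Q$ be tabloids of the same shape $\lambda$ with $\lambda_i=\lambda_{i+1}$. Then the dominance constant satisfies \[ r_{i+1}(P,Q)=\operatorname{lch}_i(P)-\operatorname{lch}_i(Q).\]
   Context: Fix $n\ge1$; $\overline i=i+n\mathbb Z$, $[\overline n]=\{\overline1,\dots,\overline n\}$. A tabloid of shape $\lambda$ ($\lambda$ a partition) is a sequence of pairwise disjoint subsets $T_1,T_2,\dots,T_{\ell(\lambda)}$ (rows) of $[\overline n]$ with $|T_r|=\lambda_r$. Broken order: $\overline1<\overline2<\dots<\overline n$. Local charge: suppose rows $k$ and $k+1$ of a tabloid $T$ both have size $m$. List the elements of $T_k$ as $\overline{a_1}<\dots<\overline{a_m}$ in broken order. For $t=1,\dots,m$ in turn, match $\overline{a_t}$ with the smallest (in broken order) not yet matched element of $T_{k+1}$ that is larger than $\overline{a_t}$, if one exists, and otherwise with the smallest not yet matched element of $T_{k+1}$. Then $\operatorname{lch}_k(T)$ is the number of $t$ such that $\overline{a_t}$ is larger (in broken order) than the element it is matched with. Streams: cells are pairs $(i,j)\in\mathbb Z^2$ (row $i$, increasing southward; column $j$, increasing eastward); $(i,j)$ is northwest of $(i',j')$ if $i\le i'$, $j\le j'$; north means smaller row index, west smaller column index. For $A,B\subseteq[\overline n]$ with $|A|=|B|=m\ge1$ and $r\in\mathbb Z$, enumerate $\bigcup A=\{\dots<a_0<a_1<a_2<\dots\}\subseteq\mathbb Z$ with $1\le a_1<\dots<a_m\le n$ and $a_{t+m}=a_t+n$, and similarly $\bigcup B=\{b_t\}$;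 define the stream $\Sigma_r(A,B)=\{(b_t,a_{t+r}):t\in\mathbb Z\}$ (rows from $B$, columns from $A$; $r$ is its altitude). A proper numbering of a stream is an indexing of its cells by $\mathbb Z$, $X^{(t)}$, with $X^{(t+1)}$ southeast of $X^{(t)}$ for all $t$. If $S,T$ are streams with the same $m$, no cell of $S$ sharing a row or column with a cell of $T$, and $S$ is properly numbered, the backward numbering of $T$ with respect to $S$ is the unique proper numbering of $T$ such that $S^{(t)}$ is northwest of $T^{(t)}$ for all $t$ and $S^{(j+1)}$ is not northwest of $T^{(j)}$ for some $j$. Then $T$ is concurrent to $S$ if, with this numbering, there exist $t,j$ with $T^{(t)}$ strictly north of $S^{(t+1)}$ and $T^{(j)}$ strictly west of $S^{(j+1)}$. For tabloids $P,Q$ of shape $\lambda$ with $\lambda_i=\lambda_{i+1}$, the dominance constant $r_{i+1}(P,Q)$ is the unique integer $r$ such that $\Sigma_r(P_{i+1},Q_{i+1})$ is concurrent to $\Sigma_0(P_i,Q_i)$ (such $r$ exists and is unique). *)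

(* Defs.v *)
From mathcomp Require Import all_boot all_order all_algebra.
Set Implicit Arguments. Unset Strict Implicit. Unset Printing Implicit Defensive.
Import Order.TTheory GRing.Theory Num.Theory.

(* Elements of [\bar n] = Z/nZ are represented by ordinals x : 'I_n, where
   x stands for the residue class of (val x).+1 \in {1,...,n}.  The broken
   order 1 < 2 < ... < n is thus the order of 'I_n. *)

Definition is_partition (lam : seq nat) : bool :=
  sorted geq lam && all (fun x => 0 < x) lam.

(* 1-based access: lambda_k and row T_k *)
Definition part (lam : seq nat) (k : nat) : nat := nth 0 lam k.-1.
Definition row n (T : seq {set 'I_n}) (k : nat) : {set 'I_n} := nth set0 T k.-1.

Definition is_tabloid n (lam : seq nat) (T : seq {set 'I_n}) : Prop :=
  size T = size lam /\
  (forall k, 1 <= k <= size lam -> #|row T k| = part lam k) /\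
  (forall k l, 1 <= k -> k < l -> l <= size lam -> [disjoint row T k & row T l]).

Definition reps n (A : {set 'I_n}) : seq nat :=
  sort leq [seq (val x).+1 | x <- enum A].

(* as, bs sorted; greedy matching of the statement *)
Fixpoint lch_aux (as_ bs : seq nat) : nat :=
  match as_ with
  | [::] => 0
  | a :: as' =>
      let b := if [seq b <- bs | a < b] is x :: _ then x else head 0 bs in
      (b < a) + lch_aux as' (rem b bs)
  end.

Definition lch n (T : seq {set 'I_n}) (k : nat) : nat :=
  lch_aux (reps (row T k)) (reps (row T k.+1)).

Local Open Scope ring_scope.

(* the enumeration  ... < a_0 < a_1 < ... of \bigcup A \subseteq Z,
   with 1 <= a_1 < ... < a_m <= n and a_{t+m} = a_t + n *)
Definition zenum n (A : {set 'I_n}) (t : int) : int :=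
  let s := reps A in
  let m : int := (size s)%:Z in
  (nth 0%N s (absz ((t - 1) %% m)%Z))%:Z + ((t - 1) %/ m)%Z * n%:Z.

Definition cell := (int * int)%type.  (* (row, column) *)

Definition stream n (A B : {set 'I_n}) (r : int) : cell -> Prop :=
  fun c => exists t : int, c = (zenum B t, zenum A (t + r)).

Definition northwest (c c' : cell) : Prop := c.1 <= c'.1 /\ c.2 <= c'.2.

Definition proper_numbering (S : cell -> Prop) (X : int -> cell) : Prop :=
  (forall t, S (X t)) /\ (forall c, S c -> exists t, X t = c) /\
  injective X /\ (forall t, northwest (X t) (X (t + 1))).

Definition backward_numbering (XS : int -> cell) (T : cell -> Prop)
    (Y : int -> cell) : Prop :=
  proper_numbering T Y /\ (forall t, northwest (XS t) (Y t)) /\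
  (exists j, ~ northwest (XS (j + 1)) (Y j)).

Definition concurrent (T S : cell -> Prop) : Prop :=
  exists XS, proper_numbering S XS /\
  exists Y, backward_numbering XS T Y /\
    (exists t, (Y t).1 < (XS (t + 1)).1) /\
    (exists j, (Y j).2 < (XS (j + 1)).2).

Definition is_dominance_constant n (P Q : seq {set 'I_n}) (i : nat) (r : int)
  : Prop :=
  concurrent (stream (row P i.+1) (row Q i.+1) r) (stream (row P i) (row Q i) 0).

(* Main.v *)
Require Import Defs.
From mathcomp Require Import all_boot all_order all_algebra zify.

Lemma lch_le (as_ bs : seq nat) :
  sorted ltn as_ -> sorted ltn bs -> size as_ = size bs ->
  (forall x, x \in as_ -> x \notin bs) ->
  forall d : nat, (lch_aux as_ bs <= d)%N <->
    (forall t0, (t0 < size as_)%N -> (count (fun b => b < nth 0%N as_ t0) bs <= t0 + d)%N).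
Proof.
elim: as_ bs => [|a as' IH] bs sa sb sz dj d /=.
  by split=> // _ t0.
have pa := sa; rewrite /= in pa.
have sa' : sorted ltn as' := path_sorted pa.
have amin : all (ltn a) as' := order_path_min ltn_trans pa.
have abs : a \notin bs by apply: dj; rewrite inE eqxx.
case E: [seq b <- bs | a < b] => [|b0 l].
- case: bs sb sz dj abs E => [//|b1 bs'] sb sz dj abs E /=.
  rewrite eqxx.
  have allb : forall b, b \in b1 :: bs' -> b < a.
    move=> b bin; have : b \notin [seq b <- b1 :: bs' | a < b] by rewrite E.
    rewrite mem_filter bin andbT -leqNgt leq_eqVlt => /orP[/eqP eba|//].
    by move: abs; rewrite -eba bin.
  have b1a : b1 < a by apply: allb; rewrite inE eqxx.
  rewrite b1a.
  have sb' : sorted ltn bs' := path_sorted sb.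
  have IH' := IH bs' sa' sb' (eq_add_S _ _ sz)
     (fun x xin => contra (fun h : x \in bs' => @mem_behead _ (b1 :: bs') x h)
                         (dj x (@mem_behead _ (a :: as') x xin))).
  have cnt' : forall x, (a <= x)%N -> count (fun b => b < x) bs' = size bs'.
    move=> x ax; apply/eqP; rewrite -all_count; apply/allP=> b bin.
    by apply: leq_trans (allb b (@mem_behead _ (b1 :: bs') _ bin)) ax.
  have ainx : forall t0, (t0 < size as')%N -> (a <= nth 0%N as' t0)%N.
    by move=> t0 h; apply: ltnW; exact: (allP amin _ (mem_nth 0%N h)).
  have key : forall t0, (t0 < (size as').+1)%N ->
     (b1 < nth 0%N (a :: as') t0) + count (fun b => b < nth 0%N (a :: as') t0) bs'
       = (size bs').+1.
    move=> [|t0] ht /=.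
      by rewrite b1a cnt'.
    have h := ainx t0 ht.
    by rewrite cnt' // (leq_trans b1a h).
  have szE : size as' = size bs' by move: sz => /= [].
  case: d => [|d'].
    by split=> // /(_ 0%N isT); rewrite key.
  rewrite add1n ltnS IH'; split.
  + move=> H t0 ht; rewrite key //.
    case: (posnP (size as')) => hs; first by rewrite -szE hs; lia.
    have := H 0%N hs; rewrite cnt' ?ainx //; lia.
  + move=> H t0 ht; have := H 0%N isT; rewrite key // cnt' ?ainx //; lia.
- have b0in : b0 \in [seq b <- bs | a < b] by rewrite E inE eqxx.
  rewrite mem_filter in b0in; case/andP: b0in => ab0 b0bs.
  rewrite ltnNge (ltnW ab0) add0n.
  have b0min : forall b, b \in bs -> a < b -> (b0 <= b)%N.
    move=> b bin ab.
    have : sorted ltn [seq b <- bs | a < b] := sorted_filter ltn_trans _ sb.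
    rewrite E /= => pf.
    have := order_path_min ltn_trans pf => /allP al.
    have : b \in b0 :: l by rewrite -E mem_filter ab bin.
    by rewrite inE => /orP[/eqP->//|/al/ltnW].
  have b0a : (b0 < a) = false by rewrite ltnNge (ltnW ab0).
  set bs'' := rem b0 bs.
  have sb'' : sorted ltn bs'' := subseq_sorted ltn_trans (rem_subseq _ _) sb.
  have sz'' : size as' = size bs'' by rewrite size_rem // -sz.
  have IH' := IH bs'' sa' sb'' sz''
     (fun x xin => contra (@mem_rem _ _ _ x) (dj x (@mem_behead _ (a :: as') x xin))).
  have cntE : forall x, count (fun b => b < x) bs = count (fun b => b < x) bs'' + (b0 < x).
    by move=> x; rewrite ((permP (perm_to_rem b0bs)) (fun b => b < x)) /= addnC.
  rewrite IH'; split.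
  + move=> H [|t0] /= ht.
      rewrite cntE b0a addn0.
      case: (posnP (size as')) => hs.
        by apply: leq_trans (count_size _ _) _; rewrite -sz'' hs.
      have ax : a < nth 0%N as' 0 := allP amin _ (mem_nth 0%N hs).
      apply: leq_trans (H 0%N hs).
      by apply: sub_count => b /= ba; apply: ltn_trans ba ax.
    rewrite cntE; have := H t0 ht; case: (b0 < _) => /=; lia.
  + move=> H t0 ht.
    have xa : a < nth 0%N as' t0 := allP amin _ (mem_nth 0%N ht).
    have := H t0.+1 ht; rewrite /= cntE.
    case: ltnP => hb /=; first lia.
    have hx : nth 0%N as' t0 < b0.
      rewrite ltn_neqAle hb andbT; apply/negP=> /eqP ex.
      by move: (dj (nth 0%N as' t0) (@mem_behead _ (a :: as') _ (mem_nth 0%N ht))); rewrite ex b0bs.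
    have -> : count (fun b => b < nth 0%N as' t0) bs'' = count (fun b => b < a) bs''.
      apply: eq_in_count => b /mem_rem bin /=.
      apply/idP/idP => h; last by apply: ltn_trans h xa.
      rewrite ltnNge; apply/negP => ba.
      have : b != a by apply/eqP => eba; move: abs; rewrite -eba bin.
      rewrite neq_ltn ltnNge ba /= => ab.
      have := b0min b bin ab; lia.
    have := H 0%N isT; rewrite /= cntE b0a; lia.
Qed.
Import Order.TTheory GRing.Theory Num.Theory.
Local Open Scope ring_scope.

Definition zs (s : seq nat) (n : nat) (t : int) : int :=
  let m : int := (size s)%:Z in
  (nth 0%N s (absz ((t - 1) %% m)%Z))%:Z + ((t - 1) %/ m)%Z * n%:Z.

Lemma zenumE n (A : {set 'I_n}) t : zenum A t = zs (reps A) n t.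
Proof. by []. Qed.

Section Z.
Variables (s : seq nat) (n : nat).
Hypothesis s_pos : (0 < size s)%N.

Lemma zs_spec (t0 : nat) (q : int) : (t0 < size s)%N ->
  zs s n (t0%:Z + 1 + q * (size s)%:Z) = (nth 0%N s t0)%:Z + q * n%:Z.
Proof.
move=> ht; rewrite /zs.
have -> : t0%:Z + 1 + q * (size s)%:Z - 1 = q * (size s)%:Z + t0%:Z.
  by rewrite addrAC addrK addrC.
have mz : (size s)%:Z != 0 by case: (size s) s_pos.
rewrite divzMDl // divz_small ?addr0; last first.
  by apply/andP; split => //; rewrite ltz_nat.
rewrite modzMDl modz_small; last by apply/andP; split => //; rewrite ltz_nat.
by [].
Qed.

Lemma zs_dec (t : int) : exists t0 q, (t0 < size s)%N /\ t = t0%:Z + 1 + q * (size s)%:Z.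
Proof.
have mz : (size s)%:Z != 0 by case: (size s) s_pos.
exists (absz ((t - 1) %% (size s)%:Z)%Z), ((t - 1) %/ (size s)%:Z)%Z; split.
  rewrite -ltz_nat gez0_abs ?modz_ge0 //; exact: ltz_pmod.
rewrite gez0_abs ?modz_ge0 //.
have := divz_eq (t - 1) (size s)%:Z => h.
rewrite [RHS]addrC addrA -h; by rewrite subrK.
Qed.

Lemma zs_shift (u q : int) : zs s n (u + q * (size s)%:Z) = zs s n u + q * n%:Z.
Proof.
have [t0 [q1 [ht ->]]] := zs_dec u.
rewrite -addrA -mulrDl !zs_spec // mulrDl addrA.
by [].
Qed.

End Z.


Section Z2.
Variables (s : seq nat) (n : nat).
Hypothesis s_pos : (0 < size s)%N.
Hypothesis s_sort : sorted ltn s.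
Hypothesis s_rng : forall x, x \in s -> (0 < x <= n)%N.

Lemma nth_rng i : (i < size s)%N -> (0 < nth 0%N s i <= n)%N.
Proof. by move=> h; apply: s_rng; exact: mem_nth. Qed.

Lemma zs_succ t : zs s n t < zs s n (t + 1).
Proof.
have [t0 [q [ht ->]]] := zs_dec s s_pos t.
case: (ltnP t0.+1 (size s)) => h.
  have -> : t0%:Z + 1 + q * (size s)%:Z + 1 = (t0.+1)%:Z + 1 + q * (size s)%:Z.
    by rewrite -addn1 PoszD; rewrite addrAC.
  rewrite !zs_spec // ltrD2r ltz_nat.
  by apply: (sorted_ltn_nth ltn_trans 0%N s_sort); rewrite ?inE.
have e : t0.+1 = size s by apply/eqP; rewrite eqn_leq h ht.
have -> : t0%:Z + 1 + q * (size s)%:Z + 1 = 0%N%:Z + 1 + (q + 1) * (size s)%:Z.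
  by rewrite -e mulrDl mul1r; lia.
rewrite !zs_spec //; have := @nth_rng t0 ht; have := @nth_rng 0%N s_pos.
move=> /andP[h1 _] /andP[_ h2].
rewrite mulrDl mul1r.
have : (nth 0%N s t0)%:Z < (nth 0%N s 0)%:Z + n%:Z.
  rewrite -PoszD ltz_nat; lia.
move=> hh; nia.
Qed.

Lemma zs_ltS (u : int) (k : nat) : zs s n u < zs s n (u + (k.+1)%:Z).
Proof.
elim: k => [|k IH]; first exact: zs_succ.
apply: lt_trans IH _.
have -> : u + (k.+2)%:Z = (u + (k.+1)%:Z) + 1 by lia.
exact: zs_succ.
Qed.

Lemma zs_lt (u v : int) : u < v -> zs s n u < zs s n v.
Proof.
move=> h; have -> : v = u + ((absz (v - u - 1)%R).+1)%:Z.
  rewrite -addn1 PoszD gez0_abs; [lia | lia].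
exact: zs_ltS.
Qed.

Lemma zs_le (u v : int) : u <= v -> zs s n u <= zs s n v.
Proof.
rewrite le_eqVlt => /orP[/eqP->//|h]; exact/ltW/zs_lt.
Qed.

End Z2.

Lemma nth_count (bs : seq nat) (a i : nat) : sorted ltn bs -> (i < size bs)%N ->
  (nth 0%N bs i < a)%N = (i < count (fun b => b < a)%N bs)%N.
Proof.
elim: bs i => [//|b bs' IH] i sb /= hi.
have pb := order_path_min ltn_trans sb.
have c0 : (a <= b)%N -> count (fun b0 => b0 < a)%N bs' = 0%N.
  move=> ab; apply/eqP; rewrite -leqn0 leqNgt -has_count; apply/hasP => [[x xin xa]].
  have := allP pb x xin; lia.
case: i hi => [|i] hi /=.
  by case: ltnP => h //=; rewrite c0.
case: (ltnP b a) => h /=; first by rewrite add1n ltnS IH // (path_sorted sb).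
rewrite c0 // add0n.
rewrite ltn0; apply/negbTE; rewrite -leqNgt.
have := allP pb _ (mem_nth 0%N (hi : (i < size bs')%N)); simpl; lia.
Qed.


Section Z3.
Variables (s : seq nat) (n : nat).
Hypothesis s_pos : (0 < size s)%N.
Hypothesis s_sort : sorted ltn s.
Hypothesis s_rng : forall x, x \in s -> (0 < x <= n)%N.

Lemma zsK (a : nat) (u : int) : (0 < a <= n)%N -> a \notin s ->
  ((a%:Z <= zs s n u) = ((count (fun b => b < a)%N s)%:Z < u)).
Proof.
move=> ha an.
set k := count _ s.
have ks : (k <= size s)%N := count_size _ _.
have zk : zs s n k%:Z < a%:Z.
  case: (posnP k) => k0.
    rewrite k0.
    have -> : 0%N%:Z = ((size s).-1)%:Z + 1 + (-1) * (size s)%:Z.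
      by case: (size s) s_pos => // m _; lia.
    have hm : ((size s).-1 < size s)%N by lia.
    rewrite zs_spec //.
    have := @nth_rng s n s_rng _ hm => /andP[_ hh].
    lia.
  have -> : k%:Z = (k.-1)%:Z + 1 + 0 * (size s)%:Z by rewrite mul0r addr0; lia.
  rewrite zs_spec //; last by lia.
  rewrite mul0r addr0 ltz_nat nth_count //; lia.
have zk1 : a%:Z < zs s n (k%:Z + 1).
  case: (ltnP k (size s)) => hk.
    have -> : k%:Z + 1 = k%:Z + 1 + 0 * (size s)%:Z by rewrite mul0r addr0.
    rewrite zs_spec // mul0r addr0 ltz_nat ltn_neqAle.
    rewrite leqNgt nth_count // ltnn andbT.
    by apply/eqP => e; move: an; rewrite e mem_nth.
  have e : k = size s by apply/eqP; rewrite eqn_leq ks hk.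
  have -> : k%:Z + 1 = 0%N%:Z + 1 + 1 * (size s)%:Z by rewrite mul1r e; lia.
  rewrite zs_spec // mul1r.
  have := @nth_rng s n s_rng 0%N s_pos; lia.
apply/idP/idP => h.
  rewrite ltNge; apply/negP => uk.
  have := @zs_le s n s_pos s_sort s_rng _ _ uk; lia.
have : k%:Z + 1 <= u by lia.
move=> /(@zs_le s n s_pos s_sort s_rng _ _); lia.
Qed.

End Z3.

Lemma good_iff (as_ bs : seq nat) (n : nat) :
  (0 < size as_)%N -> size as_ = size bs -> sorted ltn as_ -> sorted ltn bs ->
  (forall x, x \in as_ -> (0 < x <= n)%N) -> (forall x, x \in bs -> (0 < x <= n)%N) ->
  (forall x, x \in as_ -> x \notin bs) ->
  forall d : int, (forall t, zs as_ n t <= zs bs n (t + d)) <-> (lch_aux as_ bs)%:Z <= d.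
Proof.
move=> pa sz sa sb ra rb dj d.
have pb : (0 < size bs)%N by rewrite -sz.
have step1 : (forall t, zs as_ n t <= zs bs n (t + d)) <->
    (forall t0, (t0 < size as_)%N ->
       (count (fun b => b < nth 0%N as_ t0)%N bs)%:Z < t0%:Z + 1 + d).
  split.
    move=> H t0 ht; have := H (t0%:Z + 1 + 0 * (size as_)%:Z).
    rewrite zs_spec // mul0r !addr0 zsK //.
      by apply: ra; exact: mem_nth.
    by apply: dj; exact: mem_nth.
  move=> H t; have [t0 [q [ht ->]]] := zs_dec as_ pa t.
  have -> : t0%:Z + 1 + q * (size as_)%:Z + d = (t0%:Z + 1 + d) + q * (size bs)%:Z.
    by rewrite -sz; lia.
  rewrite zs_spec // zs_shift // lerD2r.
  rewrite zsK //; first exact: H.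
    by apply: ra; exact: mem_nth.
  by apply: dj; exact: mem_nth.
rewrite step1.
case: (ltP d 0) => hd.
  split => [H|H]; last by lia.
  have := H 0%N pa; lia.
have -> : d = (absz d)%:Z by rewrite gez0_abs.
rewrite lez_nat lch_le //.
split=> H t0 ht; have := H t0 ht; lia.
Qed.
Lemma shift_num (z w : int -> int) (X : int -> cell) :
  (forall u v, u < v -> z u < z v) ->
  proper_numbering (fun c => exists t, c = (z t, w t)) X ->
  exists c, forall t, X t = (z (t + c), w (t + c)).
Proof.
move=> zlt [mem [sur [inj nw]]].
have zinj : forall u v, z u = z v -> u = v.
  move=> u v e; case: (ltgtP u v) => // h; have := zlt _ _ h; rewrite e ltxx //.
have mono1 : forall u (k : nat), (X u).1 <= (X (u + k%:Z)).1.
  move=> u; elim=> [|k IH]; first by rewrite addr0.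
  apply: le_trans IH _; have -> : u + (k.+1)%:Z = (u + k%:Z) + 1 by lia.
  by case: (nw (u + k%:Z)).
have mono : forall u v, u <= v -> (X u).1 <= (X v).1.
  move=> u v h; have -> : v = u + (absz (v - u))%:Z by rewrite gez0_abs; lia.
  exact: mono1.
have fwd : forall t k, X t = (z k, w k) -> X (t + 1) = (z (k + 1), w (k + 1)).
  move=> t k e; have [s' e'] := mem (t + 1).
  have nw1 := nw t; rewrite e e' in nw1; case: nw1 => /= h1 _.
  have ks : k < s'.
    case: (ltgtP k s') => // h.
      by have := zlt _ _ h; rewrite ltNge h1.
    by move: e'; rewrite -h -e => /inj; lia.
  case: (ltgtP s' (k + 1)) => h; first by lia.
    have [u eu] := sur (z (k + 1), w (k + 1)) (ex_intro _ (k + 1) erefl).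
    case: (lerP u t) => hu.
      have := mono _ _ hu; rewrite eu e /=.
      have : k < k + 1 by lia.
      by move=> /zlt; rewrite ltNge => /negP.
    have hu' : t + 1 <= u by lia.
    have := mono _ _ hu'; rewrite eu e' /=.
    by have := zlt _ _ h; rewrite ltNge => /negP.
  by rewrite e' h.
have bwd : forall t k, X (t + 1) = (z (k + 1), w (k + 1)) -> X t = (z k, w k).
  move=> t k e; have [s'' e''] := mem t.
  have := fwd _ _ e''; rewrite e => [[/zinj h _]].
  by rewrite e''; have -> : s'' = k by lia.
have [c ec] := mem 0.
exists c.
have pos : forall k : nat, X k%:Z = (z (k%:Z + c), w (k%:Z + c)).
  elim=> [|k IH]; first by rewrite add0r.
  have := fwd _ _ IH; have -> : k%:Z + 1 = (k.+1)%:Z by lia.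
  by have -> : k%:Z + c + 1 = (k.+1)%:Z + c by lia.
have neg : forall k : nat, X (- k%:Z) = (z (- k%:Z + c), w (- k%:Z + c)).
  elim=> [|k IH]; first by rewrite oppr0 add0r.
  apply: bwd; have -> : - (k.+1)%:Z + 1 = - k%:Z by lia.
  by have -> : - (k.+1)%:Z + c + 1 = - k%:Z + c by lia.
move=> t; case: (lerP 0 t) => ht.
  by have := pos (absz t); rewrite gez0_abs.
have := neg (absz t); rewrite ltz0_abs // opprK //.
Qed.
Lemma reps_size n (A : {set 'I_n}) : size (reps A) = #|A|.
Proof. by rewrite /reps size_sort size_map cardE. Qed.

Lemma reps_sorted n (A : {set 'I_n}) : sorted ltn (reps A).
Proof.
rewrite ltn_sorted_uniq_leq sort_uniq (sort_sorted leq_total) andbT.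
rewrite map_inj_uniq ?enum_uniq // => x y [] /val_inj //.
Qed.

Lemma reps_mem n (A : {set 'I_n}) x : x \in reps A -> exists2 y, y \in A & x = (val y).+1.
Proof.
rewrite /reps mem_sort => /mapP [y]; rewrite mem_enum => yA ->.
by exists y.
Qed.

Lemma reps_rng n (A : {set 'I_n}) x : x \in reps A -> (0 < x <= n)%N.
Proof. by case/reps_mem => y _ ->; rewrite ltn_ord. Qed.

Lemma reps_dj n (A B : {set 'I_n}) : [disjoint A & B] ->
  forall x, x \in reps A -> x \notin reps B.
Proof.
move=> dj x /reps_mem [y yA ->]; apply/negP => /reps_mem [y' y'B] [] /val_inj e.
by move: (disjointFr dj yA); rewrite e y'B.
Qed.

Lemma proper_of (z w : int -> int) (k : int) :
  (forall u v, u < v -> z u < z v) -> (forall u v, u <= v -> w u <= w v) ->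
  proper_numbering (fun c => exists t, c = (z t, w t)) (fun t => (z (t + k), w (t + k))).
Proof.
move=> zlt wle; split; first by move=> t; exists (t + k).
split; first by move=> c [t ->]; exists (t - k); rewrite subrK.
split.
  move=> t1 t2 [e _]; case: (ltgtP (t1 + k) (t2 + k)) => h.
  - by have := zlt _ _ h; rewrite e ltxx.
  - by have := zlt _ _ h; rewrite e ltxx.
  - lia.
move=> t; split => /=.
  by apply/ltW/zlt; lia.
by apply: wle; lia.
Qed.

Lemma side n (A A' : {set 'I_n}) : [disjoint A & A'] -> #|A| = #|A'| -> (0 < #|A|)%N ->
  [/\ (forall u v, u < v -> zenum A u < zenum A v),
      (forall u v, u < v -> zenum A' u < zenum A' v),
      (forall u v, u <= v -> zenum A u <= zenum A v),
      (forall u v, u <= v -> zenum A' u <= zenum A' v) &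
  forall d : int, (forall t, zenum A t <= zenum A' (t + d)) <->
                  (lch_aux (reps A) (reps A'))%:Z <= d].
Proof.
move=> dj ce cp.
have pA : (0 < size (reps A))%N by rewrite reps_size.
have pA' : (0 < size (reps A'))%N by rewrite reps_size -ce.
split.
- by move=> u v; rewrite !zenumE; apply: zs_lt => //; [apply: reps_sorted | apply: reps_rng].
- by move=> u v; rewrite !zenumE; apply: zs_lt => //; [apply: reps_sorted | apply: reps_rng].
- by move=> u v; rewrite !zenumE; apply: zs_le => //; [apply: reps_sorted | apply: reps_rng].
- by move=> u v; rewrite !zenumE; apply: zs_le => //; [apply: reps_sorted | apply: reps_rng].
have sz : size (reps A) = size (reps A') by rewrite !reps_size.
move=> d; exact: (@good_iff _ _ n pA sz (@reps_sorted _ A) (@reps_sorted _ A') (@reps_rng _ A) (@reps_rng _ A') (@reps_dj _ _ _ dj) d).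
Qed.

From Stdlib Require Import Classical.

Lemma neg_good (z z' : int -> int) (L : int) :
  (forall d : int, (forall t, z t <= z' (t + d)) <-> L <= d) ->
  exists u, z' (u + (L - 1)) < z u.
Proof.
move=> G; apply: NNPP => hn.
have : L <= L - 1.
  apply/G => t; rewrite leNgt; apply/negP => h; apply: hn; by exists t.
lia.
Qed.

Theorem theorem5p10 (n : nat) (lam : seq nat) (P Q : seq {set 'I_n}) (i : nat) :
  (1 <= n)%N ->
  is_partition lam ->
  is_tabloid lam P -> is_tabloid lam Q ->
  (1 <= i)%N -> (i < size lam)%N -> part lam i = part lam i.+1 ->
  forall r : int,
    is_dominance_constant P Q i r <->
    r = ((lch P i)%:Z - (lch Q i)%:Z)%R.
Proof.
move=> n1 hpart [_ [cP dP]] [_ [cQ dQ]] i1 il heq r.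
have m0 : (0 < part lam i)%N.
  case/andP: hpart => _ /allP; apply; rewrite /part; apply: mem_nth; exact: leq_ltn_trans (leq_pred i) il.
have i1' : (1 <= i <= size lam)%N by rewrite i1 ltnW.
have i2' : (1 <= i.+1 <= size lam)%N by rewrite il.
have cQ0 : (0 < #|Defs.row Q i|)%N by rewrite cQ.
have cP0 : (0 < #|Defs.row P i|)%N by rewrite cP.
have [zBlt zB'lt zBle zB'le GB] := @side _ _ _ (dQ i i.+1 i1 (ltnSn i) il)
   (etrans (cQ i i1') (etrans heq (esym (cQ _ i2')))) cQ0.
have [zAlt zA'lt zAle zA'le GA] := @side _ _ _ (dP i i.+1 i1 (ltnSn i) il)
   (etrans (cP i i1') (etrans heq (esym (cP _ i2')))) cP0.
rewrite /is_dominance_constant /concurrent /lch.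
set LA := lch_aux _ _ in GA *; set LB := lch_aux _ _ in GB *.
set zA := zenum (Defs.row P i) in zAlt zAle GA *.
set zA' := zenum (Defs.row P i.+1) in zA'lt zA'le GA *.
set zB := zenum (Defs.row Q i) in zBlt zBle GB *.
set zB' := zenum (Defs.row Q i.+1) in zB'lt zB'le GB *.
split.
- move=> [XS [pXS [Y [[pY [nwall _]] [[t1 ht1] [j1 hj1]]]]]].
  have [c ec] := @shift_num zB (fun t => zA (t + 0)) XS zBlt pXS.
  have [e ee] := @shift_num zB' (fun t => zA' (t + r)) Y zB'lt pY.
  have gB : forall u, zB u <= zB' (u + (e - c)).
    move=> u; have := nwall (u - c); rewrite ec ee => [[/= h _]].
    by move: h; rewrite subrK; have -> : u + (e - c) = u - c + e by lia.
  have gA : forall u, zA u <= zA' (u + (e - c + r)).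
    move=> u; have := nwall (u - c); rewrite ec ee => [[/= _ h]].
    by move: h; rewrite subrK addr0; have -> : u + (e - c + r) = u - c + e + r by lia.
  have hB1 : LB%:Z <= e - c by apply/GB.
  have hA1 : LA%:Z <= e - c + r by apply/GA.
  have hB2 : ~ (LB%:Z <= e - c - 1).
    move=> /GB h; have := h (t1 + 1 + c); move: ht1; rewrite ec ee /=.
    have -> : t1 + 1 + c + (e - c - 1) = t1 + e by lia.
    move=> h1 h2; have := lt_le_trans h1 h2; rewrite ltxx.
    by [].
  have hA2 : ~ (LA%:Z <= e - c + r - 1).
    move=> /GA h; have := h (j1 + 1 + c); move: hj1; rewrite ec ee /= addr0.
    have -> : j1 + 1 + c + (e - c + r - 1) = j1 + e + r by lia.
    move=> h1 h2; have := lt_le_trans h1 h2; rewrite ltxx.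
    by [].
  lia.
- move=> hr.
  have [u hu] := @neg_good _ _ _ GB.
  have [u' hu'] := @neg_good _ _ _ GA.
  exists (fun t => (zB (t + 0), zA (t + 0 + 0))); split.
    apply: (@proper_of zB (fun t => zA (t + 0)) 0 zBlt) => u1 v1 h; apply: zAle; rewrite !addr0 //.
  exists (fun t => (zB' (t + LB%:Z), zA' (t + LB%:Z + r))); split; last split.
  + split.
      apply: (@proper_of zB' (fun t => zA' (t + r)) LB%:Z zB'lt) => u1 v1 h; apply: zA'le; lia.
    split.
      move=> t; split => /=; rewrite ?addr0.
        exact: (proj2 (GB LB%:Z) (lexx _) t).
      rewrite hr; have -> : t + LB%:Z + (LA%:Z - LB%:Z) = t + LA%:Z by lia.
      exact: (proj2 (GA LA%:Z) (lexx _) t).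
    exists (u - 1) => /= [[h _]]; move: h; rewrite subrK addr0.
    have -> : u - 1 + LB%:Z = u + (LB%:Z - 1) by lia.
    by rewrite leNgt hu.
  + exists (u - 1) => /=; rewrite subrK addr0.
    by have -> : u - 1 + LB%:Z = u + (LB%:Z - 1) by lia.
  + exists (u' - 1) => /=; rewrite subrK !addr0 hr.
    by have -> : u' - 1 + LB%:Z + (LA%:Z - LB%:Z) = u' + (LA%:Z - 1) by lia.
Qed.
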